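(* Let $T_1=\{12|345,\,123|45\}$, $T_2=\{13|245,\,134|25\}$, $T_3=\{123|45,\,13|245\}$ be binary trees on leaves $\{1,\dots,5\}$. Under the JC model, $V_{T_3}\subseteq V_{T_1}\ast V_{T_2}$.
   Context: Trees are unrooted binary trees described by their nontrivial splits; $\Sigma(T)$ is the set of all splits of $T$ including trivial ones. With $G=\mathbb{Z}_2\times\mathbb{Z}_2$ and $A=(0,0)$, $C=(0,1)$, $G=(1,0)$, $T=(1,1)$, the JC model on $T$ in Fourier coordinates $q_{g_1\cdots g_5}$ is $q_{g_1\cdots g_5}=\prod_{A|B\in\Sigma(T)}a^{A|B}_{\sum_{i\in A}g_i}$ if $\sum g_i=0$ and $0$ otherwise, with $a^e_C=a^e_G=a^e_T$ for all splits $e$. $V_T\subseteq\mathbb{P}^{4^5-1}$ is the Zariski closure of the image as parameters range over complex numbers; $V\ast W$ is the join: the Zariski closure of the union of all lines meeting both $V$ and $W$. *)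

(* Defs.v *)
From mathcomp Require Import all_boot all_order all_algebra.
From mathcomp Require Import Rstruct complex mpoly.

Set Implicit Arguments.
Unset Strict Implicit.
Unset Printing Implicit Defensive.

Import GRing.Theory.
Local Open Scope ring_scope.

Notation CC := (Rdefinitions.R)[i].

Notation grp := ('Z_2 * 'Z_2)%type.
Definition nuA : grp := (0, 0).
Definition nuC : grp := (0, 1).
Definition nuG : grp := (1, 0).
Definition nuT : grp := (1, 1).

(* Leaves 1..5 are 'I_5 = {0,..,4} (leaf i is the ordinal i-1). *)
Definition leaf := 'I_5.

(* Labellings (g_1,...,g_5) in G^5: they index the 4^5 Fourier coordinates. *)
Definition labelling := {ffun leaf -> grp}.

(* Points of the affine space C^(4^5), i.e. of the affine cone over
   P^(4^5 - 1): a coordinate q_{g_1...g_5} for each labelling. *)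
Definition point := {ffun labelling -> CC}.

(* A split A|B of the leaf set is represented by one of its sides A.
   A tree is given by the list of its nontrivial splits; Sigma(T) adds
   the trivial (leaf) splits {i}|rest. *)
Definition split := {set leaf}.
Definition tree := seq split.
Definition Sigma (T : tree) : seq split := T ++ [seq [set i] | i <- enum 'I_5].

Definition JC_params (a : split -> grp -> CC) : Prop :=
  forall e, a e nuC = a e nuG /\ a e nuG = a e nuT.

(* The Fourier parametrization q_{g_1..g_5}.  Note that when sum_i g_i = 0,
   the sum over A equals the sum over B, so the side chosen is irrelevant. *)
Definition JC_map (T : tree) (a : split -> grp -> CC) : point :=
  [ffun g : labelling =>
     if \sum_(i : leaf) g i == 0
     then \prod_(e <- Sigma T) a e (\sum_(i in e) g i)
     else 0].

Definition nvars : nat := #|{: labelling}|.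
Definition coord_poly := {mpoly CC[nvars]}.
Definition peval (p : coord_poly) (x : point) : CC :=
  p.@[fun i : 'I_nvars => x (enum_val i)].
Definition homogeneous (p : coord_poly) : Prop := exists d : nat, p \is d.-homog.

(* Projective points are represented by nonzero vectors (their affine
   representatives).  A set of projective points is a predicate on
   vectors, only its nonzero members count.
   Zariski closure in P^(4^5-1): x lies in the closure of S iff every
   homogeneous polynomial vanishing on (the nonzero points of) S vanishes at x. *)
Definition proj_closure (S : point -> Prop) : point -> Prop :=
  fun x => x != 0 /\
    forall p : coord_poly, homogeneous p ->
      (forall y, S y -> y != 0 -> peval p y = 0) -> peval p x = 0.

Definition V (T : tree) : point -> Prop :=
  proj_closure (fun x => exists a, JC_params a /\ x = JC_map T a).

(* Union of all lines meeting V and W: the line through two distinct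
   projective points [u] in V, [v] in W is {[s u + t v] : (s,t) <> (0,0)}. *)
Definition lines_union (Vs Ws : point -> Prop) : point -> Prop :=
  fun x => exists (u v : point) (s t : CC),
    [/\ Vs u /\ Ws v, u != 0 /\ v != 0,
        (forall c : CC, v != c *: u) & x = s *: u + t *: v].

Definition join (Vs Ws : point -> Prop) : point -> Prop :=
  proj_closure (lines_union Vs Ws).

Definition l1 : leaf := @Ordinal 5 0 isT.
Definition l2 : leaf := @Ordinal 5 1 isT.
Definition l3 : leaf := @Ordinal 5 2 isT.
Definition l4 : leaf := @Ordinal 5 3 isT.
Definition l5 : leaf := @Ordinal 5 4 isT.

Definition T1 : tree := [:: [set l1; l2]; [set l1; l2; l3]].
Definition T2 : tree := [:: [set l1; l3]; [set l1; l3; l4]].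
Definition T3 : tree := [:: [set l1; l2; l3]; [set l1; l3]].

(* Main.v *)
Require Import Defs.
From mathcomp Require Import all_boot all_order all_algebra.
From mathcomp Require Import Rstruct complex mpoly.
From mathcomp Require Import ring.
Import GRing.Theory.
Local Open Scope ring_scope.

Lemma jc_nz (a : Defs.split -> grp -> CC) e h : JC_params a -> h != 0 -> a e h = a e nuC.
Proof.
move=> /(_ e) [H1 H2].
case: h => -[[|[|k]] Hk] -[[|[|k']] Hk'] //= _.
- by congr (a e (_,_)); apply: val_inj.
- by rewrite H1; congr (a e (_,_)); apply: val_inj.
- by rewrite H1 H2; congr (a e (_,_)); apply: val_inj.
Qed.

Definition bF (a : Defs.split -> grp -> CC) (e : Defs.split) (h : grp) : CC :=
  if e == [set l1; l2] then a [set l1; l3] nuC else a e h.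

Definition bG (a : Defs.split -> grp -> CC) (e : Defs.split) (h : grp) : CC :=
  if e == [set l1; l3] then (if h == 0 then a [set l1; l3] 0 - a [set l1; l3] nuC else 0)
  else if e == [set l1; l3; l4] then 1
  else if e == [set l2] then a e h * a [set l1; l2; l3] h else a e h.

Lemma set1_neq (i x y : leaf) (e : Defs.split) : x != y -> x \in e -> y \in e -> ([set i] == e) = false.
Proof.
move=> nxy hx hy; apply/negbTE/eqP => E; move: hx hy; rewrite -E !inE => /eqP Ex /eqP Ey.
by rewrite Ex Ey eqxx in nxy.
Qed.

Lemma leaves_eq (F : Defs.split -> grp) (f : Defs.split -> grp -> CC) :
  \prod_(e <- [seq [set i] | i <- enum 'I_5]) f e (F e) = \prod_(i < 5) f [set i] (F [set i]).
Proof. by rewrite big_map big_enum. Qed.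

Lemma decomp (a : Defs.split -> grp -> CC) : JC_params a ->
  JC_map T3 a = JC_map T1 (bF a) + JC_map T2 (bG a).
Proof.
move=> ja; apply/ffunP => g; rewrite !ffunE.
case: eqP => _; last by rewrite addr0.
rewrite /Sigma /T1 /T2 /T3 !big_cat /= !big_cons !big_nil !mulr1 !leaves_eq.
rewrite /bF /bG eqxx.
have ne1 : ([set l1; l2; l3] == [set l1; l2]) = false.
  by apply/negbTE/eqP => /setP /(_ l3); rewrite !inE.
have ne2 : ([set l1; l3; l4] == [set l1; l3]) = false.
  by apply/negbTE/eqP => /setP /(_ l4); rewrite !inE.
rewrite ne1 ne2 eqxx.
rewrite eqxx.
set L := \prod_(i < 5) a [set i] _.
have -> : \prod_(i < 5)
     (if [set i] == [set l1; l2]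
      then a [set l1; l3] nuC
      else a [set i] (\sum_(i0 in [set i]) g i0)) = L.
  by apply: eq_bigr => i _; rewrite (@set1_neq i l1 l2) ?inE ?eqxx ?orbT.
have -> : \prod_(i < 5)
     (if [set i] == [set l1; l3]
      then
       if \sum_(i0 in [set i]) g i0 == 0
       then a [set l1; l3] 0 - a [set l1; l3] nuC
       else 0
      else
       if [set i] == [set l1; l3; l4]
       then 1
       else
        if [set i] == [set l2]
        then
         a [set i] (\sum_(i0 in [set i]) g i0) *
         a [set l1; l2; l3] (\sum_(i0 in [set i]) g i0)
        else a [set i] (\sum_(i0 in [set i]) g i0)) =
   L * a [set l1; l2; l3] (g l2).
  rewrite /L (bigD1 l2) //= (bigD1 l2 (P := predT)) //= big_set1 eqxx.
  rewrite (@set1_neq l2 l1 l3) ?inE ?eqxx ?orbT // (@set1_neq l2 l1 l3) ?inE ?eqxx ?orbT //.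
  rewrite [RHS]mulrAC; congr (_ * _); apply: eq_bigr => i ni.
  rewrite (@set1_neq i l1 l3) ?inE ?eqxx ?orbT // (@set1_neq i l1 l3) ?inE ?eqxx ?orbT //.
  by rewrite (inj_eq set1_inj) (negbTE ni).
have -> : \sum_(i in [set l1; l2; l3]) g i = g l2 + \sum_(i in [set l1; l3]) g i.
  have -> : [set l1; l2; l3] = l2 |: [set l1; l3].
    by apply/setP => i; rewrite !inE; case: (i == l1); case: (i == l2).
  by rewrite big_setU1 //= !inE.
set Y := \sum_(i in [set l1; l3]) g i.
case: eqP => [->|/eqP Yn].
  rewrite addr0 mulr1; ring.
rewrite (@jc_nz a _ _ ja Yn); ring.
Qed.

Lemma jc_bF a : JC_params a -> JC_params (bF a).
Proof. by move=> ja e; rewrite /bF; case: ifP => _; [by [] | exact: ja]. Qed.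

Lemma jc_bG a : JC_params a -> JC_params (bG a).
Proof.
move=> ja e; rewrite /bG; case: ifP => _; first by [].
case: ifP => _; first by [].
case: ifP => _; last exact: ja.
by case: (ja e) => -> ->; case: (ja [set l1; l2; l3]) => -> ->.
Qed.

Definition one : Defs.split -> grp -> CC := fun _ _ => 1.
Definition ind0 : Defs.split -> grp -> CC := fun _ h => if h == 0 then 1 else 0.
Definition g0 : labelling := [ffun => 0].
Definition gb : labelling := [ffun i => if i == l1 then nuC else if i == l2 then nuC else 0].

Lemma jc_one : JC_params one. Proof. by []. Qed.
Lemma jc_ind0 : JC_params ind0. Proof. by []. Qed.

Lemma sum_g0 (e : Defs.split) : \sum_(i in e) g0 i = 0.
Proof. by apply: big1 => i _; rewrite ffunE. Qed.

Lemma sum_g0T : \sum_(i : leaf) g0 i = 0.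
Proof. by apply: big1 => i _; rewrite ffunE. Qed.

Lemma sum_gb : \sum_(i : leaf) gb i = 0.
Proof. rewrite !big_ord_recl big_ord0 !ffunE /=. apply/eqP. by []. Qed.

Lemma one_g0 T : JC_map T one g0 = 1.
Proof. by rewrite ffunE sum_g0T eqxx big1. Qed.
Lemma one_gb T : JC_map T one gb = 1.
Proof. by rewrite ffunE sum_gb eqxx big1. Qed.
Lemma ind0_g0 T : JC_map T ind0 g0 = 1.
Proof. by rewrite ffunE sum_g0T eqxx big1 // => e _; rewrite sum_g0 /ind0 eqxx. Qed.
Lemma ind0_gb T : JC_map T ind0 gb = 0.
Proof.
rewrite ffunE sum_gb eqxx; apply/eqP; rewrite prodf_seq_eq0; apply/hasP.
exists [set l1]; first by rewrite /Sigma mem_cat; apply/orP; right; apply: map_f; rewrite mem_enum.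
by rewrite big_set1 ffunE /= /ind0.
Qed.

Lemma imgV T b : JC_params b -> JC_map T b != 0 -> V T (JC_map T b).
Proof. move=> jb nz; split => // p _ H; apply: H => //; by exists b. Qed.

Lemma ffun_nz (w : point) : w g0 = 1 -> w != 0.
Proof. by move=> h; apply/eqP => E; move: h; rewrite E ffunE => /eqP; rewrite eq_sym oner_eq0. Qed.

Lemma np1 T (u : point) : exists w, V T w /\ w != 0 /\ forall c : CC, w != c *: u.
Proof.
have V1 : V T (JC_map T one) by apply: imgV => //; apply: ffun_nz; rewrite one_g0.
have V2 : V T (JC_map T ind0) by apply: imgV => //; apply: ffun_nz; rewrite ind0_g0.
have N1 : JC_map T one != 0 by apply: ffun_nz; rewrite one_g0.
have N2 : JC_map T ind0 != 0 by apply: ffun_nz; rewrite ind0_g0.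
case: (Classical_Prop.classic (exists c1, JC_map T one = c1 *: u)) => [[c1 E1]|H].
  case: (Classical_Prop.classic (exists c2, JC_map T ind0 = c2 *: u)) => [[c2 E2]|H].
    exfalso.
    have a1 := one_g0 T; have a2 := ind0_g0 T; have b1 := one_gb T; have b2 := ind0_gb T.
    rewrite E1 ffunE in a1 b1; rewrite E2 ffunE in a2 b2.
    have ec : c1 = c2.
      have hu : u g0 != 0 by apply/eqP => h; move: a1; rewrite h scaler0 => /eqP; rewrite eq_sym oner_eq0.
      by apply: (mulIf hu); exact: (etrans a1 (esym a2)).
    by move: b2; rewrite -ec b1 => /eqP; rewrite oner_eq0.
  exists (JC_map T ind0); split => //; split => // c; apply/eqP => E; apply: H; by exists c.
exists (JC_map T one); split => //; split => // c; apply/eqP => E; apply: H; by exists c.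
Qed.

Lemma np2 T (v : point) : v != 0 -> exists w, V T w /\ w != 0 /\ forall c : CC, v != c *: w.
Proof.
move=> vnz.
have V1 : V T (JC_map T one) by apply: imgV => //; apply: ffun_nz; rewrite one_g0.
have V2 : V T (JC_map T ind0) by apply: imgV => //; apply: ffun_nz; rewrite ind0_g0.
have N1 : JC_map T one != 0 by apply: ffun_nz; rewrite one_g0.
have N2 : JC_map T ind0 != 0 by apply: ffun_nz; rewrite ind0_g0.
case: (Classical_Prop.classic (exists c1, v = c1 *: JC_map T one)) => [[c1 E1]|H].
  case: (Classical_Prop.classic (exists c2, v = c2 *: JC_map T ind0)) => [[c2 E2]|H].
    exfalso.
    have a1 : v g0 = c1 by rewrite E1 ffunE one_g0 [LHS]mulr1.
    have a2 : v g0 = c2 by rewrite E2 ffunE ind0_g0 [LHS]mulr1.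
    have b1 : v gb = c1 by rewrite E1 ffunE one_gb [LHS]mulr1.
    have b2 : v gb = 0 by rewrite E2 ffunE ind0_gb [LHS]mulr0.
    have c10 : c1 = 0 by rewrite -b1 b2.
    by move/eqP: vnz; apply; rewrite E1 c10 scale0r.
  exists (JC_map T ind0); split => //; split => // c; apply/eqP => E; apply: H; by exists c.
exists (JC_map T one); split => //; split => // c; apply/eqP => E; apply: H; by exists c.
Qed.

Theorem theorem5 : forall x : point, V T3 x -> join (V T1) (V T2) x.
Proof.
move=> x [xnz Hx]; split => // p hp Hp; apply: Hx => // y [a [ja ->]] ynz.
have E := decomp a ja.
set u := JC_map T1 (bF a) in E; set v := JC_map T2 (bG a) in E.
apply: (Hp _ _ ynz).
rewrite E.
have Vu : u != 0 -> V T1 u by apply: imgV; apply: jc_bF.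
have Vv : v != 0 -> V T2 v by apply: imgV; apply: jc_bG.
case: (eqVneq u 0) => [u0|unz].
  have vnz : v != 0 by move: ynz; rewrite E u0 add0r.
  have [w [Vw [wnz Hw]]] := np2 T1 _ vnz.
  exists w, v, 0, 1; split => //; first by split => //; exact: Vv.
  by rewrite scale0r add0r scale1r u0 add0r.
case: (Classical_Prop.classic (exists c, v = c *: u)) => [[c Ec]|H].
  have [w [Vw [wnz Hw]]] := np1 T2 u.
  exists u, w, (1 + c), 0; split => //; first by split => //; exact: Vu.
  by rewrite scale0r addr0 scalerDl scale1r Ec.
have vnz : v != 0.
  by apply/eqP => v0; apply: H; exists 0; rewrite v0 scale0r.
exists u, v, 1, 1; split => //.
- by split; [exact: Vu | exact: Vv].
- by move=> c; apply/eqP => Ec; apply: H; exists c.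
- by rewrite !scale1r.
Qed.
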